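(* Let $k$ be an algebraically closed field of characteristic $p>0$, let $G$ be a finite group, $K$ a subgroup of index $m$, and $W$ a finite-dimensional $kK$-module. Let $g_1 = 1, g_2, \dots, g_m$ be representatives of the left cosets of $K$ in $G$, and let $V = \mathrm{Ind}_K^G(W) = W_1\oplus\cdots\oplus W_m$ with $W_i = g_i\otimes W$. Write $\mathrm{End}_k(V) = \bigoplus_{i,j}\mathrm{Hom}_k(W_i,W_j)$ and let $\pi_{ij}: \mathrm{End}_k(V)\to \mathrm{Hom}_k(W_i,W_j)$ be the corresponding projections. Let $\rho: G\to\mathrm{GL}(V)$ be the representation. If $(G,V)$ is weakly adequate, then for each $j$, the set $\{\pi_{1j}(\rho(g)) : g \in g_jK,\ g \text{ has order prime to } p\}$ spans $\mathrm{Hom}_k(W_1,W_j)$. In particular, if some coset $g_jK$ contains no element of order prime to $p$, then $(G,V)$ is not weakly adequate.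
   Context: $(G,V)$ is weakly adequate if $\mathrm{End}_k(V)$ is spanned by $\{\rho(g): g\in G,\ \rho(g)\text{ semisimple}\}$. *)

(* Defs.v *)
From HB Require Import structures.
From mathcomp Require Import all_boot all_order all_algebra all_fingroup mxrepresentation.
Set Implicit Arguments. Unset Strict Implicit. Unset Printing Implicit Defensive.
Import GRing.Theory.
Local Open Scope ring_scope.

(* Convention: a matrix representation rW : mx_representation k K n is read
   as acting on COLUMN vectors (rW (x * y) = rW x *m rW y is exactly the
   multiplicativity of a left module action), so that a block (j, i) of an
   endomorphism of W_1 (+) ... (+) W_m is a map W_i -> W_j. *)

Definition spanned_by (F : fieldType) (I : finType) (n : nat)
  (A : {set I}) (P : I -> Prop) (f : I -> 'M[F]_n) : Prop :=
  forall M : 'M[F]_n, exists c : I -> F,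
    (forall i, c i != 0 -> i \in A /\ P i) /\ M = \sum_(i in A) c i *: f i.

(* (G, rho) is weakly adequate: End_k(V) is spanned by the semisimple
   rho(g), g in G (semisimple = diagonalizable, k algebraically closed). *)
Definition weakly_adequate (F : fieldType) (gT : finGroupType)
  (G : {group gT}) (N : nat) (rho : gT -> 'M[F]_N) : Prop :=
  spanned_by G (fun x => diagonalizable (rho x)) rho.

(* Induced representation Ind_K^G W, W_i = g_i (x) W, on the block space
   W_0 (+) ... (+) W_(m-1): x (g_i (x) w) = g_j (x) (h w) where
   x g_i = g_j h, h in K; block (j, i) of Ind x is rW (g_j^-1 x g_i) if this
   lies in K, and 0 otherwise. *)
Definition ind_mx (F : fieldType) (gT : finGroupType) (K : {group gT})
  (n m : nat) (rW : mx_representation F K n) (g : 'I_m -> gT) (x : gT)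
  : 'M[F]_(\sum_(i < m) n) :=
  \mxblock_(j < m, i < m)
     (if ((g j)^-1 * x * g i)%g \in K then rW ((g j)^-1 * x * g i)%g else 0 : 'M[F]_n).

Definition pi_blk (F : fieldType) (n m : nat)
  (A : 'M[F]_(\sum_(i < m) n)) (i j : 'I_m) : 'M[F]_n :=
  submxblock A j i.

(* Main.v *)
Require Import Defs.
From HB Require Import structures.
From mathcomp Require Import all_boot all_order all_algebra all_fingroup all_solvable mxrepresentation.

Import GRing.Theory.
Local Open Scope ring_scope.
Local Open Scope group_scope.

Lemma ind_mx_mul (k : fieldType) (gT : finGroupType) (G K : {group gT}) n m
  (rW : mx_representation k K n) (g : 'I_m -> gT) :
  (forall i, g i \in G) -> (forall x, x \in G -> exists i, x \in g i *: K) ->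
  (forall i j, (g i)^-1 * g j \in K -> i = j) ->
  forall x y, x \in G -> y \in G ->
  ind_mx rW g (x * y) = (ind_mx rW g x *m ind_mx rW g y)%R.
Proof.
move=> gG cov guniq x y xG yG.
rewrite /ind_mx mul_mxblock; apply: eq_mxblock => j i.
have [l yl] := cov (y * g i) (groupM yG (gG i)).
rewrite mem_lcoset mulgA in yl.
rewrite (bigD1 l) //= big1 ?addr0; last first.
  move=> l' nl'; rewrite [X in (_ *m X)%R]ifF ?mulmx0 //.
  apply/negbTE/negP => h; move/eqP: nl'; apply.
  apply: guniq.
  suff -> : (g l')^-1 * g l = ((g l')^-1 * y * g i) * ((g l)^-1 * y * g i)^-1.
    by apply: groupM => //; apply: groupVr.
  by rewrite !invMg invgK !mulgA !mulgK.
rewrite yl.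
have E : (g j)^-1 * x * g l * ((g l)^-1 * y * g i) = (g j)^-1 * (x * y) * g i.
  by rewrite !mulgA mulgK.
have [hx|hx] := boolP ((g j)^-1 * x * g l \in K).
  rewrite [in LHS]ifT; last by rewrite -E groupM.
  by rewrite -E (repr_mxM rW).
rewrite mul0mx ifF //; apply/negbTE/negP => h; move/negP: hx; apply.
suff -> : (g j)^-1 * x * g l = ((g j)^-1 * (x * y) * g i) * ((g l)^-1 * y * g i)^-1.
  by apply: groupM => //; apply: groupVr.
by rewrite -E mulgK.
Qed.

Lemma ind_mx1 (k : fieldType) (gT : finGroupType) (K : {group gT}) n m
  (rW : mx_representation k K n) (g : 'I_m -> gT) :
  (forall i j, (g i)^-1 * g j \in K -> i = j) ->
  ind_mx rW g 1 = 1%R.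
Proof.
move=> guniq.
rewrite -[RHS](mxdiagZ 1) /mxdiag /ind_mx; apply: eq_mxblock => j i.
rewrite mulg1; case: eqP => [<-|nji].
  by rewrite mulVg group1 repr_mx1 conform_mx_id.
by rewrite ifF //; apply/negbTE/negP => /guniq.
Qed.

Lemma ind_mxX (k : fieldType) (gT : finGroupType) (G K : {group gT}) n m
  (rW : mx_representation k K n) (g : 'I_m -> gT) :
  (forall i, g i \in G) -> (forall x, x \in G -> exists i, x \in g i *: K) ->
  (forall i j, (g i)^-1 * g j \in K -> i = j) ->
  forall x a, x \in G -> ind_mx rW g (x ^+ a) = (ind_mx rW g x ^+ a)%R.
Proof.
move=> gG cov guniq x a xG; elim: a => [|a IH].
  by rewrite expg0 expr0 ind_mx1.
by rewrite expgS exprS (ind_mx_mul _ _ _ _ _ _ rW g gG cov guniq) ?groupX // IH mulmxE.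
Qed.

Lemma pchar_unipotent (F : fieldType) (p : nat) (z : F) e :
  p \in [pchar F] -> (z ^+ (p ^ e) = 1 -> z = 1)%R.
Proof.
move=> pc; elim: e z => [|e IH] z; first by rewrite expn0 expr1.
rewrite expnS exprM => H; have zp := IH _ H.
have : ((z - 1) ^+ p = 0)%R.
  by rewrite -!(pFrobenius_autE pc) pFrobenius_autB_comm ?pFrobenius_autE ?zp ?expr1n ?subrr //; apply: commr1.
by move/eqP; rewrite expf_eq0 subr_eq0 => /andP[_ /eqP].
Qed.

Lemma conj_pow (F : fieldType) N (P D : 'M[F]_N) k : P \in unitmx ->
  ((invmx P *m D *m P) ^+ k = invmx P *m (D ^+ k) *m P)%R.
Proof.
move=> Pu; elim: k => [|k IH]; first by rewrite !expr0 mulmx1 mulVmx.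
rewrite !exprS IH -!mulmxE !mulmxA; congr (_ *m _).
by rewrite -!mulmxA mulKVmx.
Qed.

Lemma diag_pow (F : fieldType) N (d : 'rV[F]_N) k :
  ((diag_mx d) ^+ k = diag_mx (\row_i (d 0 i) ^+ k))%R.
Proof.
elim: k => [|k IH].
  by apply/matrixP => i j; rewrite expr0 !mxE.
rewrite exprS IH -mulmxE mul_diag_mx; apply/matrixP => i j; rewrite !mxE.
by case: eqP => [->|]; rewrite ?mulr1n ?mulr0n ?mulr0 ?exprS.
Qed.

Lemma diag_unip (F : fieldType) (p : nat) N (A : 'M[F]_N) a e :
  p \in [pchar F] -> diagonalizable A ->
  (((A ^+ a) ^+ (p ^ e))%R = 1%R) -> (A ^+ a)%R = 1%R.
Proof.
move=> pc [P Pu /(diagonalizable_forLR Pu)[d]] ->; rewrite mxpoly.conjVmx //.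
rewrite -exprM !conj_pow // !diag_pow => H.
have H1 : diag_mx (\row_i ((d 0 i) ^+ (a * p ^ e))%R) = 1%:M.
  transitivity (P *m (invmx P *m diag_mx (\row_i ((d 0 i) ^+ (a * p ^ e))%R) *m P) *m invmx P).
    by rewrite !mulmxA mulmxV // mul1mx -mulmxA mulmxV // mulmx1.
  by rewrite H mulmx1 mulmxV.
have H2 : diag_mx (\row_i ((d 0 i) ^+ a)%R) = 1%:M.
  apply/matrixP => i j; rewrite !mxE; case: eqP => // ->; rewrite !mulr1n.
  apply: (pchar_unipotent _ _ _ e pc).
  move/matrixP: H1 => /(_ j j); rewrite !mxE eqxx !mulr1n.
  by rewrite exprM.
by rewrite H2 mulmx1 mulVmx.
Qed.

Lemma ind_constt (k : fieldType) (gT : finGroupType) (G K : {group gT}) n m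
  (rW : mx_representation k K n) (g : 'I_m -> gT) (p : nat) :
  p \in [pchar k] ->
  (forall i, g i \in G) -> (forall x, x \in G -> exists i, x \in g i *: K) ->
  (forall i j, (g i)^-1 * g j \in K -> i = j) ->
  forall x, x \in G -> diagonalizable (ind_mx rW g x) ->
  ind_mx rW g x = ind_mx rW g (x.`_p^') /\ x.`_p^' \in G.
Proof.
move=> pc gG cov guniq x xG D.
have pr := pcharf_prime pc.
have xpG : x.`_p \in G by rewrite /constt groupX.
have xqG : x.`_p^' \in G by rewrite /constt groupX.
split=> //.
have h1 : ind_mx rW g (x.`_p) = 1%R.
  rewrite {1}/constt (ind_mxX _ _ _ _ _ _ rW g gG cov guniq) //.
  apply: (diag_unip _ p _ _ _ (logn p #[x]) pc D).
  rewrite -!(ind_mxX _ _ _ _ _ _ rW g gG cov guniq) ?groupX //.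
  rewrite -[x ^+ _]/(x.`_p) -p_part -order_constt expg_order.
  exact: ind_mx1.
by rewrite -{1}(consttC p x) (ind_mx_mul _ _ _ _ _ _ rW g gG cov guniq) // h1 mul1mx.
Qed.

Lemma pi_blk_sum (F : fieldType) n m (T : finType) (A : pred T) (c : T -> F)
   (f : T -> 'M[F]_(\sum_(i < m) n)) i j :
  pi_blk (\sum_(x in A) c x *: f x)%R i j = (\sum_(x in A) c x *: pi_blk (f x) i j)%R.
Proof.
rewrite /pi_blk submxblock_sum; apply: eq_bigr => x _.
by apply/matrixP => a b; rewrite !mxE.
Qed.

Theorem lemma5p1 (k : closedFieldType) (p : nat) (gT : finGroupType)
  (G K : {group gT}) (n m : nat) (rW : mx_representation k K n)
  (g : 'I_m.+1 -> gT) :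
  p \in [pchar k] ->
  K \subset G ->
  g ord0 = 1 ->
  (forall i, g i \in G) ->
  (forall x, x \in G -> exists i, x \in g i *: K) ->
  (forall i j, (g i)^-1 * g j \in K -> i = j) ->
  (weakly_adequate G (ind_mx rW g) ->
     forall j : 'I_m.+1,
       spanned_by (g j *: K) (fun x => coprime #[x] p)
         (fun x => pi_blk (ind_mx rW g x) ord0 j))
  /\
  ((0 < n)%N -> (exists j : 'I_m.+1, forall x, x \in g j *: K -> ~~ coprime #[x] p) ->
     ~ weakly_adequate G (ind_mx rW g)).
Proof.
move=> pc sKG g0 gG cov guniq.
have pr := pcharf_prime pc.
have P1 : weakly_adequate G (ind_mx rW g) ->
     forall j : 'I_m.+1,
       spanned_by (g j *: K) (fun x => coprime #[x] p)
         (fun x => pi_blk (ind_mx rW g x) ord0 j).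
  move=> WA j M0.
  pose M : 'M[k]_(\sum_(i < m.+1) n) :=
    \mxblock_(a, b) (if (a == j) && (b == ord0) then M0 else 0%R : 'M[k]_n).
  have [c [cS cE]] := WA M.
  pose f y := pi_blk (ind_mx rW g y) ord0 j.
  have fz : forall y, y \notin g j *: K -> f y = 0%R.
    move=> y yK; rewrite /f /pi_blk /ind_mx mxblockK g0 mulg1 ifF //.
    by apply/negbTE; rewrite -mem_lcoset.
  have M0E : M0 = (\sum_(x in G) c x *: f x)%R.
    by rewrite -pi_blk_sum -cE /pi_blk mxblockK !eqxx.
  pose c' y := if y \in g j *: K then (\sum_(x in G | x.`_p^' == y) c x)%R else 0%R.
  exists c'; split.
    move=> y; rewrite /c'; case: ifP => yK; last by rewrite eqxx.
    move=> nz; split => //.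
    apply/negPn/negP => ncop; move/eqP: nz; apply.
    apply: big1 => x /andP[_ /eqP yE]; rewrite -yE in ncop.
    by move: ncop; rewrite (p'nat_coprime (p_elt_constt p^' x) (pnat_id pr)).
  rewrite M0E.
  transitivity (\sum_(x in G) c x *: f (x.`_p^'))%R.
    apply: eq_bigr => x xG; have [->|nz] := eqVneq (c x) 0%R; first by rewrite !scale0r.
    have [_ D] := cS x nz.
    have [E _] := ind_constt _ _ _ _ _ _ rW g p pc gG cov guniq x xG D.
    by rewrite /f E.
  rewrite (bigID (fun x => x.`_p^' \in g j *: K)) /= [X in (_ + X)%R]big1 ?addr0; last first.
    by move=> x /andP[_ nin]; rewrite fz // scaler0.
  rewrite (partition_big (fun x => x.`_p^') (fun y => y \in g j *: K)); last first.
    by move=> x /andP[].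
  apply: eq_bigr => y yK; rewrite /c' yK scaler_suml.
  rewrite (eq_bigl (fun x => (x \in G) && (x.`_p^' == y))); last first.
    by move=> x; case: (x.`_p^' =P y) => [->|_]; rewrite ?yK ?andbT ?andbF.
  by rewrite /f; apply: eq_bigr => x /andP[_ /eqP ->].
split=> // npos [j hj] WA.
have [c [cS cE]] := P1 WA j 1%:M.
have : (1%:M : 'M[k]_n) = 0%R.
  rewrite cE; apply: big1 => y yK.
  have [->|nz] := eqVneq (c y) 0%R; first by rewrite scale0r.
  have [_ cop] := cS y nz.
  by have := hj y yK; rewrite cop.
move/matrixP/(_ (Ordinal npos) (Ordinal npos)); rewrite !mxE eqxx /= => /eqP.
by rewrite oner_eq0.
Qed.
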